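(* For every integer $k\ge 2$, $\Gamma_{\times k,t}(K_{k+1}\,\Box\,K_{k+1})=k(k+1)$.
   Context: A set $S\subseteq V(G)$ is a $k$-tuple total dominating set ($k$TDS) of a graph $G$ with $\delta(G)\ge k$ if $|N_G(x)\cap S|\ge k$ for every $x\in V(G)$. The upper $k$-tuple total domination number $\Gamma_{\times k,t}(G)$ is the maximum cardinality of a minimal (with respect to inclusion) $k$TDS of $G$. The Cartesian product $G\,\Box\,H$ has vertex set $V(G)\times V(H)$, with $(g_1,h_1)\sim(g_2,h_2)$ iff either $g_1=g_2$ and $h_1h_2\in E(H)$, or $h_1=h_2$ and $g_1g_2\in E(G)$. *)

(* Defs.v *)
From mathcomp Require Import all_boot.
Set Implicit Arguments. Unset Strict Implicit. Unset Printing Implicit Defensive.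

(* A simple graph on a finite vertex type T is a symmetric irreflexive relation. *)

Definition complete_rel (n : nat) : rel 'I_n := fun x y => x != y.
Arguments complete_rel n : clear implicits.

Definition cart_rel (T U : finType) (eG : rel T) (eH : rel U) : rel (T * U) :=
  fun p q => ((p.1 == q.1) && eH p.2 q.2) || ((p.2 == q.2) && eG p.1 q.1).

Definition nbhd (T : finType) (e : rel T) (x : T) : {set T} := [set y | e x y].

Definition is_kTDS (T : finType) (e : rel T) (k : nat) (S : {set T}) : bool :=
  [forall x, k <= #|nbhd e x :&: S|].

Definition is_minimal_kTDS (T : finType) (e : rel T) (k : nat) (S : {set T}) : bool :=
  is_kTDS e k S && [forall S' : {set T}, (S' \proper S) ==> ~~ is_kTDS e k S'].

Definition upper_ktuple_tdom (T : finType) (e : rel T) (k : nat) : nat :=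
  \max_(S : {set T} | is_minimal_kTDS e k S) #|S|.

(* Main.v *)
Require Import Defs.
From mathcomp Require Import all_boot zify.
Set Implicit Arguments. Unset Strict Implicit. Unset Printing Implicit Defensive.
Notation E n := (cart_rel (complete_rel n) (complete_rel n)).
Lemma inN n (p q : 'I_n * 'I_n) : (q \in nbhd (E n) p) =
  ((p.1 == q.1) && (p.2 != q.2)) || ((p.2 == q.2) && (p.1 != q.1)).
Proof. by rewrite inE. Qed.

Lemma card_nbhd n (p : 'I_n * 'I_n) : #|nbhd (E n) p| = n.-1 + n.-1.
Proof.
have -> : nbhd (E n) p = setX [set p.1] [set~ p.2] :|: setX [set~ p.1] [set p.2].
  apply/setP => q; rewrite inN !inE ![q.1 == _]eq_sym ![q.2 == _]eq_sym.
  by case: (p.1 == q.1); case: (p.2 == q.2).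
rewrite cardsU.
have -> : setX [set p.1] [set~ p.2] :&: setX [set~ p.1] [set p.2] = set0.
  apply/setP => q; rewrite !inE.
  by case: (q.1 == p.1); case: (q.2 == p.2); rewrite ?andbF.
by rewrite cards0 !cardsX !cards1 !cardsC1 card_ord mul1n muln1 subn0.
Qed.

Lemma crit k (S : {set 'I_k.+1 * 'I_k.+1}) (hmin : is_minimal_kTDS (E k.+1) k S)
  (hM : #|~: S| <= k) v (hv : v \in S) :
  exists x, [/\ v \in nbhd (E k.+1) x, ~: S \subset nbhd (E k.+1) x & k <= #|~: S|].
Proof.
move/andP: hmin => [hT /forallP hmin].
have := hmin (S :\ v); rewrite properD1 // /= => /forallPn [x hx].
rewrite -ltnNge in hx.
have hxk := (forallP hT) x.
have hvN : v \in nbhd (E k.+1) x.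
  apply/negPn/negP => hvn.
  have : #|nbhd (E k.+1) x :&: S| <= #|nbhd (E k.+1) x :&: (S :\ v)|.
    apply: subset_leq_card; apply/subsetP => y; rewrite !inE => /andP[hy hyS].
    by rewrite hy hyS andbT; apply/negP => /eqP e; rewrite -e inE hy in hvn.
  lia.
have hle : #|nbhd (E k.+1) x :&: S| <= k.
  have : #|nbhd (E k.+1) x :&: S| <= #|v |: (nbhd (E k.+1) x :&: (S :\ v))|.
    apply: subset_leq_card; apply/subsetP => y; rewrite !inE => /andP[hy hyS].
    by rewrite hy hyS /=; case: (y == v).
  move=> h; apply: (leq_trans h); rewrite cardsU1.
  by apply: leq_trans (leq_add (leq_b1 _) (leqnn _)) _; rewrite add1n.
have hD : k <= #|nbhd (E k.+1) x :\: S|.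
  have := cardsID S (nbhd (E k.+1) x); rewrite card_nbhd /=; move: hle; set A := #|_ :&: S|; set D := #|_ :\: S|; lia.
have sub : nbhd (E k.+1) x :\: S \subset ~: S.
  by apply/subsetP => y; rewrite !inE => /andP[].
have eqs : nbhd (E k.+1) x :\: S = ~: S.
  by apply/eqP; rewrite eqEcard sub /=; exact: leq_trans hM hD.
exists x; split => //; last by rewrite -eqs.
by rewrite -eqs subsetDl.
Qed.

Lemma other k (hk : 1 <= k) (i : 'I_k.+1) : exists j, j != i.
Proof.
have : 0 < #|[set~ i]| by rewrite cardsC1 card_ord.
by case/card_gt0P => j; rewrite !inE => h; exists j.
Qed.

Lemma small1 k (hk : 2 <= k) (M : {set 'I_k.+1 * 'I_k.+1}) q :
  k <= #|M| -> (forall p, p \in M -> p = q) -> False.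
Proof.
move=> hM hq.
have : #|M| <= #|[set q]|.
  by apply: subset_leq_card; apply/subsetP => p /hq ->; rewrite inE.
rewrite cards1; lia.
Qed.

Lemma small_col k (hk : 2 <= k) (M : {set 'I_k.+1 * 'I_k.+1}) r0 r' b :
  r0 != r' -> k <= #|M| ->
  (forall p, p \in M -> [/\ p.2 = b, p.1 != r0 & p.1 != r']) -> False.
Proof.
move=> hr hM hp.
have : #|M| <= #|setX (~: [set r0; r']) [set b]|.
  apply: subset_leq_card; apply/subsetP => p /hp [h1 h2 h3].
  by rewrite !inE h1 eqxx andbT negb_or h2 h3.
rewrite cardsX cards1 muln1.
have := cardsC [set r0; r']; rewrite cards2 hr card_ord.
move: hM; set A := #|M|; set B := #|~: _|; lia.
Qed.

Lemma small_row k (hk : 2 <= k) (M : {set 'I_k.+1 * 'I_k.+1}) c0 c' a :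
  c0 != c' -> k <= #|M| ->
  (forall p, p \in M -> [/\ p.1 = a, p.2 != c0 & p.2 != c']) -> False.
Proof.
move=> hr hM hp.
have : #|M| <= #|setX [set a] (~: [set c0; c'])|.
  apply: subset_leq_card; apply/subsetP => p /hp [h1 h2 h3].
  by rewrite !inE h1 eqxx /= negb_or h2 h3.
rewrite cardsX cards1 mul1n.
have := cardsC [set c0; c']; rewrite cards2 hr card_ord.
move: hM; set A := #|M|; set B := #|~: _|; lia.
Qed.

Lemma upper_bd k (hk : 2 <= k) (S : {set 'I_k.+1 * 'I_k.+1})
  (hmin : is_minimal_kTDS (E k.+1) k S) : #|S| <= k * k.+1.
Proof.
rewrite leqNgt; apply/negP => hS.
have hM : #|~: S| <= k.
  have := cardsC S; rewrite card_prod card_ord.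
  move: hS; set a := #|S|; set b := #|~: S|; nia.
have cr := crit hmin hM.
have [r0 hr0] : exists r0, forall p, p \in ~: S -> p.1 != r0.
  have : ~~ ([set: 'I_k.+1] \subset [set p.1 | p in ~: S]).
    apply/negP => /subset_leq_card; rewrite cardsT card_ord => h.
    have := leq_imset_card (fun p : 'I_k.+1 * 'I_k.+1 => p.1) (~: S).
    move: h hM; set a := #|_|; set b := #|~: S|; lia.
  case/subsetPn => r0 _ hr; exists r0 => p hp; apply/eqP => e.
  by move/negP: hr; apply; rewrite -e; apply: imset_f.
have [c0 hc0] : exists c0, forall p, p \in ~: S -> p.2 != c0.
  have : ~~ ([set: 'I_k.+1] \subset [set p.2 | p in ~: S]).
    apply/negP => /subset_leq_card; rewrite cardsT card_ord => h.
    have := leq_imset_card (fun p : 'I_k.+1 * 'I_k.+1 => p.2) (~: S).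
    move: h hM; set a := #|_|; set b := #|~: S|; lia.
  case/subsetPn => c0 _ hr; exists c0 => p hp; apply/eqP => e.
  by move/negP: hr; apply; rewrite -e; apply: imset_f.
have inS : forall p, (p \in ~: S -> False) -> p \in S.
  by move=> p h; case: (boolP (p \in S)) => // hn; exfalso; apply: h; rewrite inE.
have v0S : (r0, c0) \in S.
  by apply: inS => h; have := hr0 _ h; rewrite eqxx.
have [[a b] [hvx hsub hkM]] := cr _ v0S.
have hk1 : 1 <= k by lia.
move: hvx; rewrite inN /= => /orP[] /andP[/eqP ea hb].
- subst a.
  have colM : forall p, p \in ~: S -> p.2 = b /\ p.1 != r0.
    move=> p hp; have e1 : (r0 == p.1) = false by rewrite eq_sym; apply/negbTE/hr0.
    have := subsetP hsub p hp; rewrite inN /= e1 /= => /andP[/eqP <- h].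
    by split => //; rewrite eq_sym e1.
  have [r' hr'] := other hk1 r0.
  have [c' hc'] := other hk1 b.
  have v'S : (r', c') \in S.
    by apply: inS => h; have [/= e _] := colM _ h; rewrite e eqxx in hc'.
  have [[a' d'] [hvx' hsub' _]] := cr _ v'S.
  case: (d' =P b) => hd.
  + subst d'.
    have e2 : (b == c') = false by rewrite eq_sym; apply/negbTE.
    move: hvx'; rewrite inN /= e2 /= andbT orbF => /eqP ea'.
    subst a'.
    apply: (small_col hk (r0 := r0) (r' := r') (b := b) _ hkM); first by rewrite eq_sym.
    move=> p hp; have [e h] := colM p hp.
    have := subsetP hsub' p hp; rewrite inN /= e eqxx /= => h2.
    by split => //; move: h2; rewrite andbF /= eq_sym.
  + apply: (small1 hk (q := (a', b)) hkM) => p hp; have [e h] := colM p hp.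
    have := subsetP hsub' p hp; rewrite inN /= e.
    have -> : (d' == b) = false by apply/eqP.
    rewrite /= andbT orbF => /eqP ea.
    by case: p hp e h ea => x y /= _ -> _ <-.
- subst b.
  have rowM : forall p, p \in ~: S -> p.1 = a /\ p.2 != c0.
    move=> p hp; have e1 : (c0 == p.2) = false by rewrite eq_sym; apply/negbTE/hc0.
    have := subsetP hsub p hp; rewrite inN /= e1 /= andbT orbF => /eqP <-.
    by split => //; rewrite eq_sym e1.
  have [r' hr'] := other hk1 a.
  have [c' hc'] := other hk1 c0.
  have v'S : (r', c') \in S.
    by apply: inS => h; have [/= e _] := rowM _ h; rewrite e eqxx in hr'.
  have [[a' d'] [hvx' hsub' _]] := cr _ v'S.
  case: (a' =P a) => hd.
  + subst a'.
    have e2 : (a == r') = false by rewrite eq_sym; apply/negbTE.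
    move: hvx'; rewrite inN /= e2 /= andbT => /eqP ed'.
    subst d'.
    apply: (small_row hk (c0 := c0) (c' := c') (a := a) _ hkM); first by rewrite eq_sym.
    move=> p hp; have [e h] := rowM p hp.
    have := subsetP hsub' p hp; rewrite inN /= e eqxx /= andbF orbF => h2.
    by split => //; rewrite eq_sym.
  + apply: (small1 hk (q := (a, d')) hkM) => p hp; have [e h] := rowM p hp.
    have := subsetP hsub' p hp; rewrite inN /= e.
    have -> : (a' == a) = false by apply/eqP.
    rewrite /= andbT => /eqP ea.
    by case: p hp e h ea => x y /= _ -> _ <-.
Qed.
Lemma lower k (hk : 2 <= k) : exists S : {set 'I_k.+1 * 'I_k.+1},
  is_minimal_kTDS (E k.+1) k S /\ #|S| = k * k.+1.
Proof.
pose S := [set p : 'I_k.+1 * 'I_k.+1 | p.2 != ord0].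
have eS : S = setX setT [set~ (@ord0 k)] by apply/setP => p; rewrite !inE.
exists S; split; last by rewrite eS cardsX cardsT cardsC1 !card_ord mulnC.
apply/andP; split.
  apply/forallP => -[a b]; case: (b =P ord0) => [->|hb].
    apply: (@leq_trans #|setX [set a] [set~ (@ord0 k)]|).
      by rewrite cardsX cards1 cardsC1 card_ord mul1n.
    apply: subset_leq_card; apply/subsetP => -[x y].
    rewrite in_setI inN !inE /= => /andP[/eqP -> hy]; rewrite eqxx hy /=.
    by rewrite eq_sym hy.
  apply: (@leq_trans #|setX [set~ a] [set b]|).
    by rewrite cardsX cards1 cardsC1 card_ord muln1.
  apply: subset_leq_card; apply/subsetP => -[x y].
  rewrite in_setI inN !inE /= => /andP[hx /eqP ->]; rewrite eqxx eq_sym hx /= orbT /=.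
  by apply/eqP.
apply/forallP => S'; apply/implyP => /properP[sub [[a b] vS vS']].
apply/forallPn; exists (a, ord0); rewrite -ltnNge.
have hb : b != ord0 by move: vS; rewrite inE.
apply: (@leq_ltn_trans #|(setX [set a] [set~ (@ord0 k)]) :\ (a, b)|).
  apply: subset_leq_card; apply/subsetP => -[x y]; rewrite in_setI inN.
  move=> /andP[hN hS]; have := subsetP sub _ hS; rewrite inE /= => hy.
  have hy' : (ord0 == y) = false by rewrite eq_sym (negbTE hy).
  move: hN; rewrite /= hy' andFb orbF => /andP[/eqP hax _]; subst x.
  rewrite !inE eqxx hy /= andbT.
  by apply/negP => /eqP e; rewrite -e hS in vS'.
have : (a, b) \in setX [set a] [set~ (@ord0 k)] by rewrite !inE eqxx hb.
move=> hin; have := cardsD1 (a, b) (setX [set a] [set~ (@ord0 k)]); rewrite hin cardsX cards1 cardsC1 card_ord mul1n /=. lia.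
Qed.

Theorem mainTheorem9 (k : nat) (hk : 2 <= k) :
  upper_ktuple_tdom (cart_rel (complete_rel k.+1) (complete_rel k.+1)) k
  = k * k.+1.
Proof.
rewrite /upper_ktuple_tdom; apply/eqP; rewrite eqn_leq; apply/andP; split.
  apply/bigmax_leqP => S hS. exact: (upper_bd hk hS).
have [S [hS hc]] := lower hk; rewrite -hc; exact: leq_bigmax_cond S hS.
Qed.
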